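(* Let $A$ be a satisfiable EFO branch. Then $A$ has a standard model $\mathcal{I}$ in which $\mathcal{I}\alpha$ is countable for every sort $\alpha$.
   Context: Types: a countable set of base types including a distinguished $o$; other base types are sorts ($\alpha$). Types: base types and $\sigma\tau$ (functions from $\sigma$ to $\tau$; $\sigma\tau\mu=\sigma(\tau\mu)$). Countably many names with unique types, infinitely many per type. Terms: names; $st:\mu$ for $s:\tau\mu,t:\tau$; $\lambda x.t:\sigma\tau$ for a name $x:\sigma$, $t:\tau$. Logical constants: $\neg:oo$, $\to:ooo$, $=_\sigma:\sigma\sigma o$ for every type $\sigma$, and $\forall_\alpha:(\alpha o)o$ for every sort $\alpha$; all other names are variables. Formulas: terms of type $o$; $s\neq_\sigma t$ is $\neg((=_\sigma s)t)$. A term is EFO if the only logical constants occurring in it are $\neg$, $\to$, $=_\alpha$ and $\forall_\alpha$ ($\alpha$ sorts). A formula is quasi-EFO if it is EFO or of the form $s\neq_\sigma t$ with $s,t$ EFO. Semantics: a frame $\mathcal{D}$ maps types to nonempty sets with $\mathcal{D}(\sigma\tau)\subseteq(\mathcal{D}\sigma\to\mathcal{D}\tau)$; standard if $\mathcal{D}(\sigma\tau)=(\mathcal{D}\sigma\to\mathcal{D}\tau)$. An assignment $\mathcal{I}$ into $\mathcal{D}$ extends $\mathcal{D}$ and maps names $x:\sigma$ into $\mathcal{D}\sigma$; $\mathcal{I}^x_a$ is the update. Partial evaluation: $\hat{\mathcal{I}}x=\mathcal{I}x$; $\hat{\mathcal{I}}(st)=(\hat{\mathcal{I}}s)(\hat{\mathcal{I}}t)$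 when defined; $\hat{\mathcal{I}}(\lambda x.s)=f$ if $\lambda x.s:\sigma\tau$, $f\in\mathcal{D}(\sigma\tau)$ and $\widehat{\mathcal{I}^x_a}s=fa$ for all $a\in\mathcal{D}\sigma$. An interpretation is an assignment with total evaluation. Logical: $\mathcal{I}o=\{0,1\}$, $\mathcal{I}(\neg)$ negation, $\mathcal{I}(\to)$ implication, $\mathcal{I}(=_\sigma)$ identity, $\mathcal{I}(\forall_\alpha)f=1$ iff $f$ is the constant function $1$. A set of formulas is satisfiable if some logical interpretation (into an arbitrary frame) evaluates each of them to $1$; a standard model is such a logical assignment into a standard frame. Normalization: fixed type-preserving total $[\cdot]$; $s$ normal iff $[s]=s$; (N1) $[[s]]=[s]$; (N2) $[[s]t]=[st]$; (N3) $[ys_1\dots s_n]=y[s_1]\dots[s_n]$ for a name $y$, $n\ge0$, $ys_1\dots s_n$ of base type; (N4) $\hat{\mathcal{I}}[s]=\hat{\mathcal{I}}s$ for every interpretation. Substitutions: type-preserving partial functions $\theta$ from names to terms ($\theta^x_s$ update), each extending to a type-preserving total $\hat\theta$ with (S1) $\hat\theta x=\theta x$ if $x\in\mathrm{Dom}\theta$, else $x$; (S2) $\hat\theta(st)=(\hat\theta s)(\hat\theta t)$; (S3) $[(\hat\theta(\lambda x.s))t]=[\widehat{\theta^x_t}s]$; (S4) $[\hat\emptyset s]=[s]$. An EFO branch is a set of normal quasi-EFO formulas. *)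

(* Defs.v *)
From mathcomp Require Import all_boot.
Set Implicit Arguments.
Unset Strict Implicit.
Unset Printing Implicit Defensive.

Inductive ty (S : countType) : Type :=
| To : ty S
| Tsort : S -> ty S
| Tarr : ty S -> ty S -> ty S.
Arguments To {S}.

Definition is_base {S : countType} (s : ty S) : bool :=
  match s with Tarr _ _ => false | _ => true end.
Definition is_sort {S : countType} (s : ty S) : bool :=
  match s with Tsort _ => true | _ => false end.

Definition S_dec {S : countType} (a b : S) : {a = b} + {a <> b} :=
  match a =P b with ReflectT e => left e | ReflectF n => right n end.

Definition ty_dec {S : countType} (s t : ty S) : {s = t} + {s <> t}.
Proof. pose proof (@S_dec S). decide equality. Defined.

Inductive name (S : countType) : Type :=
| NVar : ty S -> nat -> name S
| NNeg : name S
| NImp : name S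
| NEq : ty S -> name S
| NAll : S -> name S.
Arguments NNeg {S}.
Arguments NImp {S}.

Definition ntype {S : countType} (x : name S) : ty S :=
  match x with
  | NVar s _ => s
  | NNeg => Tarr To To
  | NImp => Tarr To (Tarr To To)
  | NEq s => Tarr s (Tarr s To)
  | NAll a => Tarr (Tarr (Tsort a) To) To
  end.

Definition name_dec {S : countType} (x y : name S) : {x = y} + {x <> y}.
Proof.
  pose proof (@S_dec S). pose proof (@ty_dec S).
  pose proof (fun m n : nat => match m =P n with ReflectT e => left e | ReflectF k => right k end : {m = n} + {m <> n}). decide equality.
Defined.

Inductive tm (S : countType) : ty S -> Type :=
| TNm (x : name S) : tm (ntype x)
| TApp (s t : ty S) : tm (Tarr s t) -> tm s -> tm t
| TLam (x : name S) (t : ty S) : tm t -> tm (Tarr (ntype x) t).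
Arguments TNm {S} x.
Arguments TApp {S s t} _ _.
Arguments TLam {S} x {t} _.

Definition tneq {S : countType} (s : ty S) (a b : tm s) : tm To :=
  TApp (TNm NNeg) (TApp (TApp (TNm (NEq s)) a) b).

Definition efo_name {S : countType} (x : name S) : bool :=
  match x with
  | NVar _ _ => true
  | NNeg => true
  | NImp => true
  | NEq s => is_sort s
  | NAll _ => true
  end.

Fixpoint efo {S : countType} (s : ty S) (t : tm s) : bool :=
  match t with
  | TNm x => efo_name x
  | TApp _ _ u v => efo u && efo v
  | TLam x _ u => efo_name x && efo u
  end.

Definition quasi_efo {S : countType} (f : tm (@To S)) : Prop :=
  efo f \/ exists (s : ty S) (a b : tm s), efo a /\ efo b /\ f = tneq a b.

(* A frame: nonempty carriers with D(st) a set of functions D s -> D t,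
   presented as an extensional applicative structure. *)
Record frame (S : countType) : Type := Frame {
  dom : ty S -> Type;
  app : forall s t, dom (Tarr s t) -> dom s -> dom t;
  app_ext : forall s t (f g : dom (Tarr s t)),
      (forall a, app f a = app g a) -> f = g;
  dom_ne : forall s, inhabited (dom s)
}.
Arguments app {S} _ {s t} _ _.

Definition standard {S : countType} (F : frame S) : Prop :=
  forall (s t : ty S) (h : dom F s -> dom F t),
    exists f : dom F (Tarr s t), forall a, app F f a = h a.

Definition assignment {S : countType} (F : frame S) : Type :=
  forall x : name S, dom F (ntype x).

Definition upd {S : countType} {F : frame S} (I : assignment F)
  (x : name S) (a : dom F (ntype x)) : assignment F :=
  fun y => match name_dec x y with
           | left e => eq_rect x (fun z => dom F (ntype z)) a y e
           | right _ => I y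
           end.
Arguments upd {S F} I x a _.

(* partial evaluation, as a relation *)
Inductive eval {S : countType} (F : frame S) :
  assignment F -> forall s : ty S, tm s -> dom F s -> Prop :=
| ev_nm (I : assignment F) (x : name S) : eval I (TNm x) (I x)
| ev_app (I : assignment F) (s t : ty S) (u : tm (Tarr s t)) (v : tm s)
    (f : dom F (Tarr s t)) (a : dom F s) :
    eval I u f -> eval I v a -> eval I (TApp u v) (app F f a)
| ev_lam (I : assignment F) (x : name S) (t : ty S) (u : tm t)
    (f : dom F (Tarr (ntype x) t)) :
    (forall a : dom F (ntype x), eval (upd I x a) u (app F f a)) ->
    eval I (TLam x u) f.

Definition interpretation {S : countType} {F : frame S} (I : assignment F) : Prop :=
  forall (s : ty S) (t : tm s), exists v, eval I t v.

Definition tv {S : countType} {F : frame S} (e : dom F To = bool) (v : dom F To) : bool :=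
  eq_rect _ (fun T : Type => T) v _ e.

Definition logical {S : countType} {F : frame S} (e : dom F To = bool)
  (I : assignment F) : Prop :=
    (forall p, tv e (app F (I NNeg) p) = ~~ tv e p) /\
    (forall p q, tv e (app F (app F (I NImp) p) q) = (tv e p ==> tv e q)) /\
    (forall (s : ty S) (a b : dom F s),
        tv e (app F (app F (I (NEq s)) a) b) = true <-> a = b) /\
    (forall (al : S) (f : dom F (Tarr (Tsort al) To)),
        tv e (app F (I (NAll al)) f) = true <-> forall a, tv e (app F f a) = true).

Definition holds {S : countType} {F : frame S} (e : dom F To = bool)
  (I : assignment F) (f : tm (@To S)) : Prop :=
  exists v, eval I f v /\ tv e v = true.

Definition satisfiable {S : countType} (A : tm (@To S) -> Prop) : Prop :=
  exists (F : frame S) (I : assignment F) (e : dom F To = bool),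
    interpretation I /\ logical e I /\ forall f, A f -> holds e I f.

Definition normop (S : countType) : Type := forall s : ty S, tm s -> tm s.

Fixpoint is_spine {S : countType} (s : ty S) (t : tm s) : bool :=
  match t with
  | TNm _ => true
  | TApp _ _ u _ => is_spine u
  | TLam _ _ _ => false
  end.

Fixpoint map_args {S : countType} (nf : normop S) (s : ty S) (t : tm s) : tm s :=
  match t in tm s return tm s with
  | TNm x => TNm x
  | TApp _ _ u v => TApp (map_args nf u) (nf _ v)
  | TLam x _ u => TLam x u
  end.

Definition norm_axioms {S : countType} (nf : normop S) : Prop :=
  (forall s (t : tm s), nf s (nf s t) = nf s t) /\
  (forall s t (u : tm (Tarr s t)) (v : tm s),
      nf t (TApp (nf _ u) v) = nf t (TApp u v)) /\
  (forall s (t : tm s), is_base s -> is_spine t ->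
      nf s t = map_args nf t) /\
  (forall (F : frame S) (I : assignment F), interpretation I ->
      forall s (t : tm s) (v : dom F s),
        eval I (nf s t) v <-> eval I t v).

Definition subst (S : countType) : Type := forall x : name S, option (tm (ntype x)).

Definition subst_empty (S : countType) : subst S := fun _ => None.

Definition supd {S : countType} (th : subst S) (x : name S) (t : tm (ntype x)) : subst S :=
  fun y => match name_dec x y with
           | left e => Some (eq_rect x (fun z => tm (ntype z)) t y e)
           | right _ => th y
           end.
Arguments supd {S} th x t _.

Definition subst_axioms {S : countType} (nf : normop S)
  (hat : subst S -> forall s : ty S, tm s -> tm s) : Prop :=
  (forall th (x : name S),
      hat th _ (TNm x) = match th x with Some t => t | None => TNm x end) /\
  (forall th s t (u : tm (Tarr s t)) (v : tm s),
      hat th t (TApp u v) = TApp (hat th _ u) (hat th s v)) /\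
  (forall th (x : name S) t (u : tm t) (v : tm (ntype x)),
      nf t (TApp (hat th _ (TLam x u)) v) = nf t (hat (supd th x v) t u)) /\
  (forall s (t : tm s), nf s (hat (@subst_empty S) s t) = nf s t).

Definition efo_branch {S : countType} (nf : normop S) (A : tm (@To S) -> Prop) : Prop :=
  forall f, A f -> nf To f = f /\ quasi_efo f.

Definition countable_type (T : Type) : Prop :=
  exists g : T -> nat, injective g.

(* Main.v *)
Require Import Defs.
From mathcomp Require Import all_boot.
From Stdlib Require Import ClassicalEpsilon ProofIrrelevance FunctionalExtensionality Eqdep_dec.
From Stdlib Require List.

Section Gen.
Context {S : countType}.

Definition eval_inv (F : frame S) (J : assignment F) (s : ty S) (t : tm s) : dom F s -> Prop :=
  match t in tm s return dom F s -> Prop with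
  | TNm x => fun v => v = J x
  | TApp s t u w => fun v => exists f a, eval J u f /\ eval J w a /\ v = app F f a
  | TLam x t u => fun f => forall a, eval (upd J x a) u (app F f a)
  end.
#[global] Arguments eval_inv {F} J {s} t.

Lemma evalE (F : frame S) (J : assignment F) s (t : tm s) v : eval (F:=F) J t v -> eval_inv J t v.
Proof. case => //=; eauto 6. Qed.

Lemma eval_det (F : frame S) (J : assignment F) s (t : tm s) v : eval (F:=F) J t v -> forall v', eval J t v' -> v = v'.
Proof.
  elim => {J s t v}.
  - by move=> J x v' /evalE.
  - move=> J s t u w f a _ IHu _ IHw v' /evalE [f' [a' [Hu [Hw ->]]]].
    by rewrite (IHu _ Hu) (IHw _ Hw).
  - move=> J x t u f _ IH f' /evalE H. apply: app_ext => a. exact: IH.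
Qed.

Fixpoint fvl (s : ty S) (t : tm s) : list (name S) :=
  match t with
  | TNm x => x :: nil
  | TApp _ _ u v => List.app (fvl _ u) (fvl _ v)
  | TLam x _ u => List.filter (fun z => if name_dec x z then false else true) (fvl _ u)
  end.
#[global] Arguments fvl {s} t.

Lemma coinc (F : frame S) (J : assignment F) s (t : tm s) v : eval (F:=F) J t v ->
  forall J', (forall z, List.In z (fvl t) -> J' z = J z) -> eval J' t v.
Proof.
  elim => {J s t v}.
  - move=> J x J' H. rewrite -H /=; [constructor | by left].
  - move=> J s t u w f a _ IHu _ IHw J' H. constructor.
    + apply: IHu => z Hz; apply: H; simpl; apply List.in_or_app; by left.
    + apply: IHw => z Hz; apply: H; simpl; apply List.in_or_app; by right.
  - move=> J x t u f _ IH J' H. constructor => a. apply: IH => z Hz.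
    rewrite /upd. case: (name_dec x z) => // ne. apply: H. simpl.
    apply List.filter_In; split => //. by case: (name_dec x z).
Qed.

Lemma upd_same (F : frame S) (J : assignment F) x a : upd J x a x = a.
Proof.
  rewrite /upd. case: (name_dec x x) => // e'.
  by rewrite (UIP_dec name_dec e' erefl).
Qed.

Lemma upd_other (F : frame S) (J : assignment F) x a z : x <> z -> upd J x a z = J z.
Proof. rewrite /upd. by case: (name_dec x z). Qed.

Lemma efo_fvl s (t : tm s) : efo t -> forall z, List.In z (fvl t) -> efo_name z.
Proof.
  elim: t => /=.
  - by move=> x H z [<-|].
  - move=> s' t' u IHu w IHw /andP[Hu Hw] z /List.in_app_iff [H|H]; eauto.
  - move=> x t' u IH /andP[_ Hu] z /List.filter_In [H _]; eauto.
Qed.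

Fixpoint lamty (ys : list (name S)) (s : ty S) : ty S :=
  match ys with nil => s | y :: ys => Tarr (ntype y) (lamty ys s) end.
Fixpoint lams (ys : list (name S)) (s : ty S) (t : tm s) : tm (lamty ys s) :=
  match ys with nil => t | y :: ys' => TLam y (lams ys' _ t) end.

#[global] Arguments lams ys {s} t.
End Gen.
Arguments evalE {S F J s t v} _.
Arguments eval_det {S F J s t v} _ {v'} _.
Arguments coinc {S F J s t v} _ J' _.
Arguments upd_same {S F} J x a.
Arguments upd_other {S F} J x a z _.

Section Enc.
Context {S : countType}.
Notation T := (GenTree.tree nat).

Fixpoint enc_ty (s : ty S) : T :=
  match s with
  | To => GenTree.Node 0 [::]
  | Tsort a => GenTree.Leaf (pickle a)
  | Tarr s t => GenTree.Node 1 [:: enc_ty s; enc_ty t]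
  end.

Fixpoint dec_ty (c : T) : option (ty S) :=
  match c with
  | GenTree.Leaf n => omap (@Tsort S) (unpickle n)
  | GenTree.Node 0 [::] => Some To
  | GenTree.Node 1 [:: a; b] =>
      match dec_ty a, dec_ty b with Some s, Some t => Some (Tarr s t) | _, _ => None end
  | _ => None
  end.

Lemma enc_tyK s : dec_ty (enc_ty s) = Some s.
Proof. elim: s => //= [a|s -> t ->] //. by rewrite pickleK. Qed.

Definition enc_name (x : name S) : T :=
  match x with
  | NVar s n => GenTree.Node 0 [:: enc_ty s; GenTree.Leaf n]
  | NNeg => GenTree.Node 1 [::]
  | NImp => GenTree.Node 2 [::]
  | NEq s => GenTree.Node 3 [:: enc_ty s]
  | NAll a => GenTree.Node 4 [:: GenTree.Leaf (pickle a)]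
  end.

Definition dec_name (c : T) : option (name S) :=
  match c with
  | GenTree.Node 0 [:: a; GenTree.Leaf n] => omap (fun s => NVar s n) (dec_ty a)
  | GenTree.Node 1 [::] => Some NNeg
  | GenTree.Node 2 [::] => Some NImp
  | GenTree.Node 3 [:: a] => omap (@NEq S) (dec_ty a)
  | GenTree.Node 4 [:: GenTree.Leaf n] => omap (@NAll S) (unpickle n)
  | _ => None
  end.

Lemma enc_nameK x : dec_name (enc_name x) = Some x.
Proof. case: x => [s n| | |s|a] /=; by rewrite ?enc_tyK ?pickleK. Qed.

Fixpoint enc_tm (s : ty S) (t : tm s) : T :=
  match t with
  | TNm x => GenTree.Node 0 [:: enc_name x]
  | TApp _ _ u v => GenTree.Node 1 [:: enc_tm _ u; enc_tm _ v]
  | TLam x _ u => GenTree.Node 2 [:: enc_name x; enc_tm _ u]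
  end.

#[global] Arguments enc_tm {s} t.

Definition app_check (s1 : ty S) (u : tm s1) (s2 : ty S) (v : tm s2) : option {s : ty S & tm s} :=
  match s1 as s1 return tm s1 -> option {s : ty S & tm s} with
  | Tarr a b => fun u =>
      match ty_dec s2 a with
      | left e => Some (existT _ b (TApp u (eq_rect s2 (@tm S) v a e)))
      | right _ => None
      end
  | _ => fun _ => None
  end u.

Fixpoint dec_tm (c : T) : option {s : ty S & tm s} :=
  match c with
  | GenTree.Node 0 [:: a] => omap (fun x => existT _ (ntype x) (TNm x)) (dec_name a)
  | GenTree.Node 1 [:: a; b] =>
      match dec_tm a, dec_tm b with
      | Some p, Some q => app_check _ (projT2 p) _ (projT2 q)
      | _, _ => None
      end
  | GenTree.Node 2 [:: a; b] =>
      match dec_name a, dec_tm b with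
      | Some x, Some p => Some (existT _ (Tarr (ntype x) (projT1 p)) (TLam x (projT2 p)))
      | _, _ => None
      end
  | _ => None
  end.

Lemma enc_tmK s (t : tm s) : dec_tm (enc_tm t) = Some (existT _ s t).
Proof.
  elim: t => /=.
  - by move=> x; rewrite enc_nameK.
  - move=> s' t' u -> v -> /=. case: (ty_dec s' s') => // e.
    by rewrite (UIP_dec ty_dec e erefl).
  - by move=> x t' u -> /=; rewrite enc_nameK.
Qed.

Definition tm_of_nat (n : nat) : option {s : ty S & tm s} :=
  obind dec_tm (unpickle n).

Lemma tm_of_natK s (t : tm s) : tm_of_nat (pickle (enc_tm t)) = Some (existT _ s t).
Proof. by rewrite /tm_of_nat pickleK /= enc_tmK. Qed.

End Enc.

Lemma tvK (T : Type) (e : T = bool) (b : bool) :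
  @eq_rect Type T (fun T : Type => T) (@eq_rect Type bool (fun T : Type => T) b T (esym e)) bool e = b.
Proof. by subst. Qed.
Lemma tvK' (T : Type) (e : T = bool) (v : T) :
  @eq_rect Type bool (fun T : Type => T) (@eq_rect Type T (fun T : Type => T) v bool e) T (esym e) = v.
Proof. by subst. Qed.

Section Main.
Context {S : countType} (F : frame S) (I : assignment F) (e : dom F To = bool)
  (HI : interpretation I) (Hlog : logical e I).
Notation X := {s : ty S & dom F s}.

Lemma existT_inj {s} {a b : dom F s} : existT _ s a = existT _ s b -> a = b.
Proof. apply: inj_pair2_eq_dec. exact: ty_dec. Qed.

Definition valI s (t : tm s) : dom F s :=
  proj1_sig (constructive_indefinite_description _ (HI s t)).
#[global] Arguments valI {s} t.
Lemma valI_spec s (t : tm s) : eval I t (valI t).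
Proof. exact: proj2_sig (constructive_indefinite_description _ (HI s t)). Qed.

Definition btoF (b : bool) : dom F To := @eq_rect Type bool (fun T : Type => T) b _ (esym e).
Lemma tv_btoF b : tv e (btoF b) = b.
Proof. exact: tvK. Qed.
Lemma btoF_tv v : btoF (tv e v) = v.
Proof. exact: tvK'. Qed.
Lemma tv_inj v v' : tv e v = tv e v' -> v = v'.
Proof. by move=> H; rewrite -(btoF_tv v) H btoF_tv. Qed.

Definition x0 : X := existT _ To (btoF true).
Definition seedX (n : nat) : X :=
  match tm_of_nat n with Some p => existT _ (projT1 p) (valI (projT2 p)) | None => x0 end.

Definition pick (P : X -> Prop) (d : X) : X :=
  match excluded_middle_informative (exists z, P z) with
  | left h => proj1_sig (constructive_indefinite_description _ h)
  | right _ => d end.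
Lemma pick_spec P d : (exists z, P z) -> P (pick P d).
Proof.
  rewrite /pick => h. case: (excluded_middle_informative _) => // h'.
  exact: proj2_sig (constructive_indefinite_description _ h').
Qed.

Definition app_rel (x y z : X) := exists s t (f : dom F (Tarr s t)) a,
  x = existT _ (Tarr s t) f /\ y = existT _ s a /\ z = existT _ t (app F f a).
Definition wit_rel (x z : X) := exists al (f : dom F (Tarr (Tsort al) To)) a,
  x = existT _ (Tarr (Tsort al) To) f /\ z = existT _ (Tsort al) a /\ tv e (app F f a) = false.
Definition ext_rel (x y z : X) := exists s t (f g : dom F (Tarr s t)) a,
  x = existT _ (Tarr s t) f /\ y = existT _ (Tarr s t) g /\ z = existT _ s a /\ app F f a <> app F g a.

Definition op (k : nat) (x y : X) : X :=
  match k with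
  | 0 => pick (app_rel x y) x
  | 1 => pick (wit_rel x) x
  | 2 => pick (ext_rel x y) x
  | 3 => x0
  | _ => existT _ To (btoF false)
  end.

Fixpoint interp (c : GenTree.tree nat) : X :=
  match c with
  | GenTree.Leaf n => seedX n
  | GenTree.Node k (c1 :: c2 :: _) => op k (interp c1) (interp c2)
  | GenTree.Node _ _ => x0
  end.

Definition Mx (x : X) := exists c, interp c = x.
Notation M s v := (Mx (existT _ s v)).

Lemma M_op k {x y} : Mx x -> Mx y -> Mx (op k x y).
Proof. move=> [c1 <-] [c2 <-]. by exists (GenTree.Node k [:: c1; c2]). Qed.

Lemma M_seed {s} {t : tm s} {v} : eval I t v -> M s v.
Proof.
  move=> H. exists (GenTree.Leaf (pickle (enc_tm t))) => /=.
  rewrite /seedX tm_of_natK /=. by rewrite (eval_det (@valI_spec s t) H).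
Qed.

Lemma M_To v : M To v.
Proof.
  rewrite -(btoF_tv v). case: (tv e v).
  - by exists (GenTree.Node 3 [:: GenTree.Leaf 0; GenTree.Leaf 0]).
  - by exists (GenTree.Node 4 [:: GenTree.Leaf 0; GenTree.Leaf 0]).
Qed.

Lemma M_app {s t} {f : dom F (Tarr s t)} {a} : M (Tarr s t) f -> M s a -> M t (app F f a).
Proof.
  move=> Hf Ha. have := M_op 0 Hf Ha. simpl.
  have := @pick_spec (app_rel (existT _ (Tarr s t) f) (existT _ s a)) (existT _ (Tarr s t) f).
  case.
  - by exists (existT _ t (app F f a)), s, t, f, a.
  - move=> s' [t' [f' [a' [H1 [H2 ->]]]]].
    have E1 := f_equal (@projT1 _ _) H1. have E2 := f_equal (@projT1 _ _) H2.
    simpl in E1, E2. case: E1 => ? ?; subst.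
    by rewrite (existT_inj H1) (existT_inj H2).
Qed.

Lemma M_wit {al} {f : dom F (Tarr (Tsort al) To)} {a} :
  M _ f -> tv e (app F f a) = false ->
  exists a', M (Tsort al) a' /\ tv e (app F f a') = false.
Proof.
  move=> Hf Ha. have := M_op 1 Hf Hf. simpl.
  have := @pick_spec (wit_rel (existT _ (Tarr (Tsort al) To) f)) (existT _ _ f).
  case.
  - by exists (existT _ (Tsort al) a), al, f, a.
  - move=> al' [f' [a' [H1 [-> H3]]]] HM.
    have E1 := f_equal (@projT1 _ _) H1. simpl in E1. case: E1 => ?; subst.
    rewrite -(existT_inj H1) in H3. by exists a'.
Qed.

Lemma M_ext s t (f g : dom F (Tarr s t)) :
  M _ f -> M _ g -> (forall a, M s a -> app F f a = app F g a) -> f = g.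
Proof.
  move=> Hf Hg H. apply: NNPP => ne.
  have [a Ha] : exists a, app F f a <> app F g a.
    apply: NNPP => H'. apply: ne; apply: app_ext => a.
    apply: NNPP => H2; apply: H'; by exists a.
  have := M_op 2 Hf Hg. simpl.
  have := @pick_spec (ext_rel (existT _ (Tarr s t) f) (existT _ (Tarr s t) g)) (existT _ _ f).
  case.
  - by exists (existT _ s a), s, t, f, g, a.
  - move=> s' [t' [f' [g' [a' [H1 [H2 [-> H4]]]]]]] HM.
    have E1 := f_equal (@projT1 _ _) H1. simpl in E1. case: E1 => ? ?; subst.
    rewrite -(existT_inj H1) -(existT_inj H2) in H4. by apply: H4; apply: H.
Qed.


Lemma M_I x : M (ntype x) (I x).
Proof. exact: M_seed (ev_nm I x). Qed.

Fixpoint domG (s : ty S) : Type :=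
  match s with
  | To => bool
  | Tsort a => {x : dom F (Tsort a) | M (Tsort a) x}
  | Tarr s t => domG s -> domG t
  end.

Definition dsort a : domG (Tsort a) := exist _ (I (NVar (Tsort a) 0)) (M_I (NVar (Tsort a) 0)).
Fixpoint dflt (s : ty S) : domG s :=
  match s as s return domG s with
  | To => true
  | Tsort a => dsort a
  | Tarr _ t => fun _ => dflt t
  end.

Lemma G_ext s t (f g : domG (Tarr s t)) : (forall a, f a = g a) -> f = g.
Proof. exact: functional_extensionality. Qed.
Lemma G_ne s : inhabited (domG s).
Proof. exact: inhabits (dflt s). Qed.

Definition G : frame S :=
  {| dom := domG; app := fun s t (f : domG (Tarr s t)) a => f a; app_ext := G_ext; dom_ne := G_ne |}.

Fixpoint R (s : ty S) : dom F s -> domG s -> Prop :=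
  match s as s return dom F s -> domG s -> Prop with
  | To => fun v b => tv e v = b
  | Tsort a => fun v b => v = proj1_sig b
  | Tarr s t => fun f g => M (Tarr s t) f /\ forall a b, R s a b -> R t (app F f a) (g b)
  end.

Lemma RM {s v b} : R s v b -> M s v.
Proof.
  case: s v b => [|a|s t] v b /=.
  - move=> _; exact: M_To.
  - by move=> ->; exact: proj2_sig b.
  - by case.
Qed.

Lemma IT s : (forall v v' b, R s v b -> R s v' b -> v = v') /\
             (forall v, M s v -> exists b, R s v b).
Proof.
  elim: s => [|a|s [Is Ts] t [It Tt]].
  - split.
    + move=> v v' b /= H1 H2; apply: tv_inj; by rewrite H1 H2.
    + move=> v _; by exists (tv e v).
  - split.
    + by move=> v v' b /= -> ->.
    + move=> v H; by exists (exist _ v H).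
  - split.
    + move=> f f' g [Hf Rf] [Hf' Rf']. apply: M_ext => // a Ha.
      have [b Hb] := Ts a Ha. exact: It _ _ _ (Rf _ _ Hb) (Rf' _ _ Hb).
    + move=> f Hf.
      have H : forall b, exists w, forall a, R s a b -> R t (app F f a) w.
        move=> b. case: (classic (exists a, R s a b)) => [[a Ha]|Hn].
        * have [w Hw] := Tt _ (M_app Hf (RM Ha)). exists w => a' Ha'.
          by rewrite (Is _ _ _ Ha' Ha).
        * exists (dflt t) => a Ha; exfalso; apply: Hn; by exists a.
      exists (fun b => proj1_sig (constructive_indefinite_description _ (H b))).
      split => // a b Hab.
      exact: (proj2_sig (constructive_indefinite_description _ (H b))) a Hab.
Qed.

Lemma lamsM ys : forall s (t : tm s) (J : assignment F) f, eval J (lams ys t) f ->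
  M (lamty ys s) f -> forall J', (forall z, ~ List.In z ys -> J' z = J z) ->
  (forall z, List.In z ys -> M (ntype z) (J' z)) -> forall v, eval J' t v -> M s v.
Proof.
  elim: ys => [|y ys IH] s t J f /= Hev Hf J' Hout Hin v Hv.
  - have E : J' = J by apply: functional_extensionality_dep => z; exact: Hout.
    subst J'. by rewrite (eval_det Hv Hev).
  - move/evalE: Hev => /= Hev.
    apply: (IH _ _ (upd J y (J' y)) (app F f (J' y)) (Hev _) _ J' _ _ v Hv).
    + exact: M_app Hf (Hin _ (or_introl erefl)).
    + move=> z Hz. case: (name_dec y z) => [E|ne].
      * subst z. by rewrite upd_same.
      * rewrite upd_other //. apply: Hout => /= [[E|E]] //.
    + move=> z Hz; apply: Hin; by right.
Qed.

Lemma lamM {s} {t : tm s} {J0 : assignment F} {v} : eval J0 t v ->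
  (forall z, List.In z (fvl t) -> M (ntype z) (J0 z)) -> M s v.
Proof.
  move=> Hv Hz. set ys := fvl t.
  have Hl := @valI_spec _ (lams ys t).
  pose J' : assignment F := fun z => if List.in_dec name_dec z ys then J0 z else I z.
  apply: (@lamsM ys s t I _ Hl (M_seed Hl) J').
  - move=> z nz; rewrite /J'; by case: List.in_dec.
  - move=> z iz; rewrite /J'; case: List.in_dec => // ?; exact: Hz.
  - apply: (coinc Hv) => z iz; rewrite /J'; by case: List.in_dec.
Qed.

Lemma Gtot s (t : tm s) : forall (J0 : assignment G), exists w, eval J0 t w.
Proof.
  elim: t => [x|s' t' u IHu w IHw|x t' u IH] J0.
  - exists (J0 x); constructor.
  - have [wf Ef] := IHu J0. have [wa Ea] := IHw J0. exists (wf wa). exact: (ev_app Ef Ea).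
  - have H : forall b, exists w, eval (upd J0 x b) u w := fun b => IH (upd J0 x b).
    exists (fun b => proj1_sig (constructive_indefinite_description _ (H b))).
    constructor => b. exact: proj2_sig (constructive_indefinite_description _ (H b)).
Qed.

Definition rel_asg (I0 : assignment F) (J0 : assignment G) :=
  forall y, efo_name y -> R (ntype y) (I0 y) (J0 y).

Lemma fund {s} {t : tm s} : efo t -> forall I0 J0, rel_asg I0 J0 ->
  forall v, eval I0 t v -> exists w, eval J0 t w /\ R s v w.
Proof.
  elim: t => [x|s' t' u IHu w IHw|x t' u IH] Hefo I0 J0 HR v Hv.
  - move/evalE: Hv => /= ->. exists (J0 x); split; [constructor | exact: HR].
  - move/andP: Hefo => [Hu Hw]. move/evalE: Hv => [f [a [Hf [Ha ->]]]].
    have [wf [Ef Rf]] := IHu Hu _ _ HR _ Hf. have [wa [Ea Ra]] := IHw Hw _ _ HR _ Ha.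
    exists (wf wa); split; first exact: (ev_app Ef Ea).
    exact: (proj2 Rf) _ _ Ra.
  - have HM : M _ v.
      apply: (lamM Hv) => z iz. apply: (RM (b := J0 z)). apply: HR. exact: efo_fvl Hefo z iz.
    move/andP: Hefo => [Hx Hu]. move/evalE: Hv => /= Hv.
    have H : forall b, exists w, eval (upd J0 x b) u w /\ forall a, R _ a b -> R t' (app F v a) w.
      move=> b. case: (classic (exists a, R _ a b)) => [[a Ha]|Hn].
      + have HR' : rel_asg (upd I0 x a) (upd J0 x b).
          move=> y Hy. rewrite /upd. case: (name_dec x y) => [E|ne]; last exact: HR.
          destruct E. exact: Ha.
        have [w [Ew Rw]] := IH Hu _ _ HR' _ (Hv a). exists w; split => // a' Ha'.
        by rewrite (proj1 (IT _) _ _ _ Ha' Ha).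
      + have [w Ew] := @Gtot _ u (upd J0 x b). exists w; split => // a Ha; exfalso; apply: Hn; by exists a.
    exists (fun b => proj1_sig (constructive_indefinite_description _ (H b))). split.
    + constructor => b. exact: proj1 (proj2_sig (constructive_indefinite_description _ (H b))).
    + split => // a b Hab. exact: (proj2 (proj2_sig (constructive_indefinite_description _ (H b)))) a Hab.
Qed.

Definition eqG s (a b : domG s) : bool :=
  if excluded_middle_informative (a = b) then true else false.
Definition allG al (g : domG (Tsort al) -> bool) : bool :=
  if excluded_middle_informative (forall b, g b = true) then true else false.
Definition partner (x : name S) : domG (ntype x) :=
  proj1_sig (constructive_indefinite_description _ (proj2 (IT (ntype x)) (I x) (M_I x))).

Definition J : assignment G := fun x =>
  match x as x return domG (ntype x) with
  | NVar s n => partner (NVar s n)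
  | NNeg => negb
  | NImp => implb
  | NEq s => @eqG s
  | NAll al => @allG al
  end.

Lemma sig_val_inj al (b d : domG (Tsort al)) : proj1_sig b = proj1_sig d -> b = d.
Proof.
  case: b d => [b Hb] [d Hd] /= E. subst d. f_equal. exact: proof_irrelevance.
Qed.

Lemma relIJ : rel_asg I J.
Proof.
  move=> [s n| | |s|al] /= Hy.
  - exact: proj2_sig (constructive_indefinite_description _ (proj2 (IT s) (I (NVar s n)) (M_I (NVar s n)))).
  - split; first exact: (M_I NNeg). move=> a b /= <-. exact: (proj1 Hlog) a.
  - split; first exact: (M_I NImp). move=> a b Hab; split; first exact: M_app (M_I NImp) (M_To a).
    move=> c d Hcd. by rewrite (proj1 (proj2 Hlog)) Hab Hcd.
  - case: s Hy => // al _. split; first exact: (M_I (NEq (Tsort al))).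
    move=> a b Hab; split; first exact: M_app (M_I (NEq (Tsort al))) (RM (b := b) Hab).
    move=> c d Hcd /=. apply/Bool.eq_iff_eq_true.
    rewrite (proj1 (proj2 (proj2 Hlog)) (Tsort al) a c) /eqG.
    case: excluded_middle_informative => h; split => // E.
    + by rewrite Hab Hcd h.
    + exfalso; apply: h; apply: sig_val_inj; by rewrite -Hab -Hcd.
  - split; first exact: (M_I (NAll al)).
    move=> f g [Hf Rfg]. apply/Bool.eq_iff_eq_true.
    rewrite (proj2 (proj2 (proj2 Hlog)) al f) /allG.
    case: excluded_middle_informative => h; split => // H0.
    + move=> a. apply: NNPP => Ha.
      have Ha' : tv e (app F f a) = false by move: Ha; case: (tv e _).
      have [a' [Ma' Fa']] := M_wit Hf Ha'.
      have := Rfg a' (exist _ a' Ma') erefl. by rewrite Fa' h.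
    + exfalso; apply: h => b. rewrite -(Rfg (proj1_sig b) b erefl). exact: H0.
Qed.

Lemma logicalJ : logical (F := G) (erefl : dom G To = bool) J.
Proof.
  split; first by []. split; first by []. split.
  - move=> s a b /=. rewrite /eqG. by case: excluded_middle_informative.
  - move=> al f /=. rewrite /allG. by case: excluded_middle_informative.
Qed.

Lemma standardG : standard G.
Proof. move=> s t h. by exists h. Qed.

Lemma countG al : countable_type (dom G (Tsort al)).
Proof.
  pose g (b : domG (Tsort al)) := pickle (proj1_sig (constructive_indefinite_description _ (proj2_sig b))).
  exists g => b d E.
  have E' := pcan_inj pickleK E.
  have Hb := proj2_sig (constructive_indefinite_description _ (proj2_sig b)).
  have Hd := proj2_sig (constructive_indefinite_description _ (proj2_sig d)).
  simpl in Hb, Hd. rewrite E' in Hb. rewrite Hb in Hd.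
  apply: sig_val_inj. exact: existT_inj Hd.
Qed.

Lemma holdsJ (f : tm (@To S)) : quasi_efo f -> holds e I f -> holds (F := G) erefl J f.
Proof.
  move=> [Hefo|[s [a [b [Ha [Hb ->]]]]]] [v [Ev Tv]].
  - have [w [Ew Rw]] := fund Hefo _ _ relIJ _ Ev. exists w; split => //. by rewrite -Rw.
  - move/evalE: Ev => [f0 [q [Ef0 [Eq Eqv]]]]. subst v.
    move/evalE: Ef0 => /= Ef0. subst f0.
    move/evalE: Eq => [f1 [vb [Ef1 [Evb Eqq]]]]. subst q.
    move/evalE: Ef1 => [f2 [va [Ef2 [Eva Eq1]]]]. subst f1.
    move/evalE: Ef2 => /= Ef2. subst f2.
    rewrite (proj1 Hlog) in Tv.
    have Hne : va <> vb.
      move=> E. subst vb. move: Tv.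
      by rewrite (proj2 (proj1 (proj2 (proj2 Hlog)) s va va) erefl).
    have [wa [Ewa Ra]] := fund Ha _ _ relIJ _ Eva.
    have [wb [Ewb Rb]] := fund Hb _ _ relIJ _ Evb.
    exists (negb (eqG _ wa wb)). split.
    + change (eval J (tneq a b) (app G (J NNeg) (app G (app G (J (NEq s)) wa) wb))).
      apply: ev_app; first exact: (ev_nm J NNeg).
      apply: ev_app; last exact: Ewb.
      apply: ev_app; [exact: (ev_nm J (NEq s)) | exact: Ewa].
    + rewrite /= /eqG. case: excluded_middle_informative => // E.
      exfalso; apply: Hne. rewrite -E in Rb. exact: (proj1 (IT s)) _ _ _ Ra Rb.
Qed.

End Main.

Theorem corollary14p7 (S : countType) (nf : normop S)
    (hat : subst S -> forall s : ty S, tm s -> tm s) :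
  norm_axioms nf -> subst_axioms nf hat ->
  forall A : tm (@To S) -> Prop,
    efo_branch nf A -> satisfiable A ->
    exists (F : frame S) (I : assignment F) (e : dom F To = bool),
      standard F /\ logical e I /\ (forall f, A f -> holds e I f) /\
      (forall al : S, countable_type (dom F (Tsort al))).
Proof.
  move=> _ _ A HA [F [I [e [HI [Hlog Hh]]]]].
  exists (@G _ F I e HI), (@J _ F I e HI), erefl.
  split; first exact: standardG.
  split; first exact: logicalJ.
  split.
  - move=> f Af. exact: (@holdsJ _ F I e HI Hlog f (proj2 (HA f Af)) (Hh f Af)).
  - exact: countG.
Qed.
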